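(* Suppose $\ell\in\mathcal{D}^-[0,\infty)$, $r\in\mathcal{D}^+[0,\infty)$ and $\psi\in\mathcal{D}[0,\infty)$ are piecewise constant, each with a finite number of jumps, and $\ell\le r$. Then the pair $(\psi-\Xi_{\ell,r}(\psi),\,-\Xi_{\ell,r}(\psi))$ is the unique solution to the ESP on $[\ell(\cdot),r(\cdot)]$ for $\psi$, where for $t\ge0$ $$\Xi_{\ell,r}(\psi)(t)=\max\Big(\big[(\psi(0)-r(0))^+\wedge\inf_{u\in[0,t]}(\psi(u)-\ell(u))\big],\ \sup_{s\in[0,t]}\big[(\psi(s)-r(s))\wedge\inf_{u\in[s,t]}(\psi(u)-\ell(u))\big]\Big).$$
   Context: $\mathcal{D}[0,\infty)$ denotes the càdlàg functions $[0,\infty)\to(-\infty,\infty)$; $\mathcal{D}^-[0,\infty)$ (resp. $\mathcal{D}^+[0,\infty)$) denotes càdlàg functions with values in $[-\infty,\infty)$ (resp. $(-\infty,\infty]$); $a\wedge b=\min\{a,b\}$, $a^+=\max\{a,0\}$. ESP: $(\phi,\eta)\in\mathcal{D}[0,\infty)^2$ solves the ESP on $[\ell(\cdot),r(\cdot)]$ for $\psi$ if (1) $\phi(t)=\psi(t)+\eta(t)\in[\ell(t),r(t)]$ for all $t\ge0$; (2) for all $0\le s\le t$: $\eta(t)-\eta(s)\ge0$ if $\phi(u)<r(u)$ for all $u\in(s,t]$, and $\eta(t)-\eta(s)\le0$ if $\phi(u)>\ell(u)$ for all $u\in(s,t]$; (3) for all $t\ge0$: $\eta(t)-\eta(t-)\ge0$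 if $\phi(t)<r(t)$, and $\eta(t)-\eta(t-)\le0$ if $\phi(t)>\ell(t)$, where $\eta(0-)=0$. *)

(* Defs.v *)
From HB Require Import structures.
From mathcomp Require Import all_boot all_order all_algebra.
From mathcomp Require Import all_classical all_reals all_analysis.
Set Implicit Arguments. Unset Strict Implicit. Unset Printing Implicit Defensive.
Import Order.TTheory GRing.Theory Num.Theory.
Import numFieldNormedType.Exports.
Local Open Scope classical_set_scope.
Local Open Scope ring_scope.

Section Defs.
Variable R : realType.

Definition cadlag (f : R -> R) : Prop :=
  (forall t, 0 <= t -> f x @[x --> t^'+] --> f t) /\
  (forall t, 0 < t -> cvg (f x @[x --> t^'-])).

(* left limit f(t-), with the convention f(0-) = 0 *)
Definition leftlim (f : R -> R) (t : R) : R :=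
  if t == 0 then 0 else lim (f x @[x --> t^'-]).

Definition pw_const (T : Type) (f : R -> T) : Prop :=
  exists (n : nat) (a : nat -> R),
    a 0%N = 0 /\
    (forall i, (i < n)%N -> a i < a i.+1) /\
    (forall i, (i < n)%N -> forall t, a i <= t < a i.+1 -> f t = f (a i)) /\
    (forall t, a n <= t -> f t = f (a n)).

Definition ESP (l r : R -> \bar R) (psi phi eta : R -> R) : Prop :=
  cadlag phi /\ cadlag eta /\
  (forall t, 0 <= t -> phi t = psi t + eta t /\
       (l t <= (phi t)%:E)%E /\ ((phi t)%:E <= r t)%E) /\
  (forall s t, 0 <= s -> s <= t ->
     ((forall u, s < u -> u <= t -> ((phi u)%:E < r u)%E) -> eta t - eta s >= 0) /\
     ((forall u, s < u -> u <= t -> (l u < (phi u)%:E)%E) -> eta t - eta s <= 0)) /\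
  (forall t, 0 <= t ->
     ((((phi t)%:E < r t)%E -> eta t - leftlim eta t >= 0) /\
      ((l t < (phi t)%:E)%E -> eta t - leftlim eta t <= 0))).

Local Open Scope ereal_scope.

Definition Xi (l r : R -> \bar R) (psi : R -> R) (t : R) : \bar R :=
  maxe
    (mine (maxe ((psi 0%R)%:E - r 0%R) 0)
          (ereal_inf [set (psi u)%:E - l u | u in `[0%R, t]]))
    (ereal_sup [set mine ((psi s)%:E - r s)
                         (ereal_inf [set (psi u)%:E - l u | u in `[s, t]])
               | s in `[0%R, t]]).

End Defs.

(* Main.v *)
Require Import Defs.
From HB Require Import structures.
From mathcomp Require Import all_boot all_order all_algebra.
From mathcomp Require Import all_classical all_reals all_analysis.
From mathcomp Require Import zify ring lra.
Import Order.TTheory GRing.Theory Num.Theory.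
Import numFieldNormedType.Exports.
Local Open Scope classical_set_scope.
Local Open Scope ring_scope.

Set Implicit Arguments. Unset Strict Implicit. Unset Printing Implicit Defensive.
Section S.
Variable R : realType.

Definition PC (T : Type) (J : seq R) (f : R -> T) :=
  forall u v, 0 <= u -> u <= v -> (forall j, j \in J -> ~ (u < j <= v)) -> f v = f u.

Lemma pw_PC T (f : R -> T) : pw_const f -> exists J, PC J f.
Proof.
move=> [n [a [a0 [_ [Hc Hl]]]]].
exists (map a (iota 0 n.+1)) => u v u0 uv HJ.
suff H : forall d i, (i + d = n)%N -> a i <= u -> f v = f u.
  by apply: (H n 0%N) => //; rewrite a0.
elim=> [|d IH] i.
  rewrite addn0 => -> ai; rewrite (Hl u ai) (Hl v) //; exact: le_trans uv.
move=> Hid ai.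
have iltn : (i < n)%N by rewrite -Hid; lia.
case: (ltP u (a i.+1)) => ua.
  have va : v < a i.+1.
    rewrite ltNge; apply/negP => av; apply: (HJ (a i.+1)).
      by apply/mapP; exists i.+1 => //; rewrite mem_iota; lia.
    by rewrite ua av.
  rewrite (Hc i iltn u) ?ai ?ua // (Hc i iltn v) // va andbT.
  exact: le_trans uv.
by apply: (IH i.+1) => //; lia.
Qed.


Definition noJ (J : seq R) a b := forall j, j \in J -> ~ (a < j < b).

Lemma gap (t : R) (J : seq R) : exists2 d, 0 < d &
  forall j, j \in J -> (t < j -> t + d <= j) /\ (j < t -> j <= t - d).
Proof.
elim: J => [|j J [d d0 IH]]; first by exists 1.
case: (ltgtP t j) => tj.
- exists (Num.min d (j - t)); first by rewrite lt_min d0 subr_gt0.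
  move=> k; rewrite inE => /predU1P[->|kJ].
    split=> [_|]; last by rewrite ltNge (ltW tj).
    by rewrite -lerBrDl ge_min lexx orbT.
  have [h1 h2] := IH k kJ; split=> [tk|kt].
    apply: le_trans (h1 tk); rewrite lerD2l ge_min lexx //.
  apply: le_trans (h2 kt) _; rewrite lerD2l lerN2 ge_min lexx //.
- exists (Num.min d (t - j)); first by rewrite lt_min d0 subr_gt0.
  move=> k; rewrite inE => /predU1P[->|kJ].
    split=> [|_]; first by rewrite ltNge (ltW tj).
    by rewrite lerBrDl -lerBrDr ge_min lexx orbT.
  have [h1 h2] := IH k kJ; split=> [tk|kt].
    apply: le_trans (h1 tk); rewrite lerD2l ge_min lexx //.
  apply: le_trans (h2 kt) _; rewrite lerD2l lerN2 ge_min lexx //.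
- exists d => // k; rewrite inE => /predU1P[->|kJ]; last exact: IH.
  by rewrite -tj ltxx.
Qed.

Lemma right_gap t J : exists2 q, t < q & noJ J t q.
Proof.
have [d d0 H] := gap t J; exists (t + d); first by rewrite ltrDl.
move=> j jJ /andP[tj jq]; have [h _] := H j jJ.
by move: (h tj); rewrite leNgt jq.
Qed.

Lemma left_gap t J : 0 < t -> exists p, [/\ 0 <= p, p < t & noJ J p t].
Proof.
move=> t0; have [d d0 H] := gap t J; exists (t - Num.min d t); split.
- by rewrite subr_ge0 ge_min lexx orbT.
- by rewrite ltrBlDr ltrDl lt_min d0 t0.
move=> j jJ /andP[pj jt]; have [_ h] := H j jJ.
move: (h jt) => jtd; move: pj; rewrite ltNge => /negP; apply.
apply: le_trans jtd _; rewrite lerD2l lerN2 ge_min lexx //.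
Qed.

Lemma PC_const T J (f : R -> T) a b : PC J f -> 0 <= a -> noJ J a b ->
  forall u, a <= u < b -> f u = f a.
Proof.
move=> Hf a0 H u /andP[au ub]; apply: Hf => // j jJ /andP[aj ju].
apply: (H j jJ); rewrite aj /=; exact: le_lt_trans ju ub.
Qed.

Definition lastp (J : seq R) (t : R) :=
  foldr (fun j acc => if (0 < j) && (j <= t) then Num.max j acc else acc) 0 J.

Lemma lastpP J t : 0 <= t ->
  [/\ 0 <= lastp J t, lastp J t <= t, lastp J t = 0 \/ (lastp J t \in J /\ 0 < lastp J t)
   & forall j, j \in J -> 0 < j -> j <= t -> j <= lastp J t].
Proof.
move=> t0; elim: J => [|j J [h1 h2 h3 h4]] /=; first by split => //; left.
case: ifP => [/andP[j0 jt]|hj].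
  split.
  - by rewrite le_max h1 orbT.
  - by rewrite ge_max jt h2.
  - case: (leP j (lastp J t)) => hh.
      case: h3 => [h3|[h3 h3']]; first by rewrite h3 in hh; move: (lt_le_trans j0 hh); rewrite ltxx.
      by right; rewrite inE h3 orbT.
    by right; rewrite inE eqxx.
  - move=> k; rewrite inE => /predU1P[->|kJ] k0 kt; first by rewrite le_max lexx.
    by rewrite le_max h4 ?orbT.
split => //.
- by case: h3 => [->|[h3 h3']]; [left|right; rewrite inE h3 orbT].
- move=> k; rewrite inE => /predU1P[->|kJ] k0 kt; last exact: h4.
  by move: hj; rewrite k0 kt.
Qed.

Definition NJ (J : seq R) t := count (fun j => j <= t) J.

Lemma NJ_lt J p m : p < m -> m \in J -> (NJ J p < NJ J m)%N.
Proof.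
move=> pm; elim: J => // j J IH; rewrite inE /NJ /= => /predU1P[<-|mJ].
  rewrite lexx (leNgt m p) pm /= add0n ltnS.
  by apply: sub_count => x /= xp; apply: le_trans xp (ltW pm).
have H : (count (<=%R^~ p) J < count (<=%R^~ m) J)%N := IH mJ.
case: (leP j p) => h1; first by rewrite (le_trans h1 (ltW pm)) /= !add1n ltnS.
case: (j <= m) => /=; rewrite ?add0n ?add1n; [by rewrite ltnS ltnW | exact: H].
Qed.

Lemma NJ_le J p m : p <= m -> (NJ J p <= NJ J m)%N.
Proof. move=> pm; apply: sub_count => x /= xp; exact: le_trans xp pm. Qed.

Lemma IP (J : seq R) (Q : R -> Prop) :
 (forall u v, 0 <= u -> u <= v -> (forall j, j \in J -> ~ (u < j <= v)) -> Q u -> Q v) ->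
 Q 0 ->
 (forall p m, 0 <= p -> p < m -> noJ J p m -> Q p -> Q m) ->
 forall t, 0 <= t -> Q t.
Proof.
move=> Hprop H0 Hstep.
suff H : forall n t, 0 <= t -> (NJ J t < n)%N -> Q t.
  by move=> t t0; apply: (H (NJ J t).+1).
elim=> // n IH t t0 Nt.
have [m0 mt m3 m4] := lastpP J t0.
apply: (Hprop (lastp J t)) => //.
  move=> j jJ /andP[mj jt]; have := m4 j jJ (le_lt_trans m0 mj) jt.
  by rewrite leNgt mj.
case: m3 => [->//|[mJ mpos]].
have [p [p0 pm hp]] := left_gap J mpos.
apply: (Hstep p) => //; apply: IH => //.
have := NJ_lt pm mJ; have := NJ_le J mt; lia.
Qed.

End S.

Section E.
Variable R : realType.
Local Open Scope ereal_scope.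

Lemma ereal_supU (A B : set (\bar R)) :
  ereal_sup (A `|` B) = maxe (ereal_sup A) (ereal_sup B).
Proof.
apply/le_anti/andP; split.
  apply/ereal_supP => y [Ay|By]; rewrite le_max.
    by rewrite (ereal_sup_ubound Ay).
  by rewrite (ereal_sup_ubound By) orbT.
by rewrite ge_max (ereal_sup_le (@subsetUl _ A B)) (ereal_sup_le (@subsetUr _ A B)).
Qed.

Lemma ereal_infU (A B : set (\bar R)) :
  ereal_inf (A `|` B) = mine (ereal_inf A) (ereal_inf B).
Proof.
apply/le_anti/andP; split; last first.
  apply/ereal_infP => y [Ay|By]; rewrite ge_min.
    by rewrite (ereal_inf_lbound Ay).
  by rewrite (ereal_inf_lbound By) orbT.
by rewrite le_min (ereal_inf_le_tmp (@subsetUl _ A B)) (ereal_inf_le_tmp (@subsetUr _ A B)).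
Qed.

Lemma sup_minr (T : Type) (A : set T) (F : T -> \bar R) m :
  ereal_sup [set mine (F v) m | v in A] = mine (ereal_sup (F @` A)) m.
Proof.
apply/le_anti/andP; split.
  apply/ereal_supP => _ [v Av <-]; rewrite le_min; apply/andP; split; last by rewrite ge_min lexx orbT.
  rewrite ge_min; apply/orP; left; apply: ereal_sup_ubound; by exists v.
case: (leP (ereal_sup (F @` A)) m) => hm.
  apply/ereal_supP => _ [v Av <-].
  case: (leP (F v) m) => hv.
    by apply: ereal_sup_ubound; exists v => //; rewrite min_l.
  have : F v <= ereal_sup (F @` A) by apply: ereal_sup_ubound; exists v.
  by move=> /le_trans /(_ hm); rewrite leNgt hv.
have [_ [v Av <-] mv] := ereal_sup_gt hm.
by apply: ereal_sup_ubound; exists v => //; rewrite min_r // ltW.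
Qed.

Lemma image_cst_set1 (T U : Type) (A : set T) (f : T -> U) c :
  (forall x, A x -> f x = c) -> A !=set0 -> f @` A = [set c].
Proof.
move=> Hf [a Aa]; apply/seteqP; split => x /=.
  by move=> [y Ay <-]; rewrite Hf.
by move=> ->; exists a => //; rewrite Hf.
Qed.


Variables (l r : R -> \bar R) (psi : R -> R).
Definition g u := (psi u)%:E - l u.
Definition h u := (psi u)%:E - r u.
Definition Ginf (A : set R) := ereal_inf (g @` A).
Definition Ssup (A : set R) t := ereal_sup [set mine (h s) (Ginf `[s, t]) | s in A].

Lemma XiE t : Xi l r psi t = maxe (mine (maxe (h 0) 0) (Ginf `[0%R, t])) (Ssup `[0%R, t] t).
Proof. by []. Qed.

Lemma itv_split (a s t : R) : (a <= s)%R -> (s <= t)%R ->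
  `[a, t]%classic = `[a, s] `|` `]s, t].
Proof. by move=> ha hs; apply: itv_bndbnd_setU; rewrite bnd_simp. Qed.

Lemma Ginf_split a s t : (a <= s)%R -> (s <= t)%R ->
  Ginf `[a, t] = mine (Ginf `[a, s]) (Ginf `]s, t]).
Proof. by move=> ha hs; rewrite /Ginf (itv_split ha hs) image_setU ereal_infU. Qed.

Lemma Xi_decomp s t : (0 <= s)%R -> (s <= t)%R ->
  Xi l r psi t = maxe (mine (Xi l r psi s) (Ginf `]s, t])) (Ssup `]s, t] t).
Proof.
move=> s0 st; rewrite !XiE (Ginf_split s0 st).
have -> : Ssup `[0%R, t] t = maxe (Ssup `[0%R, s] t) (Ssup `]s, t] t).
  by rewrite /Ssup (itv_split s0 st) image_setU ereal_supU.
have -> : Ssup `[0%R, s] t = mine (Ssup `[0%R, s] s) (Ginf `]s, t]).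
  rewrite /Ssup -sup_minr; congr ereal_sup; apply: eq_imagel => v.
  rewrite /= in_itv /= => /andP[v0 vs].
  by rewrite (Ginf_split vs st) minA.
set c := maxe (h 0) 0%R; set I := Ginf `[0%R, s]; set M := Ginf `]s, t]; set S := Ssup `[0%R, s] s.
by rewrite (min_maxl (mine c I)) -(minA c) maxA.
Qed.


Lemma hleg u : l u <= r u -> h u <= g u.
Proof. by move=> lr; rewrite /h /g leeB. Qed.

Lemma Ginf1 t : Ginf `[t, t] = g t.
Proof. by rewrite /Ginf set_itv1 image_set1 ereal_inf1. Qed.

Lemma Xi_ge_h t : (0 <= t)%R -> h t <= g t -> h t <= Xi l r psi t.
Proof.
move=> t0 hg; rewrite XiE le_max; apply/orP; right.
apply: ereal_sup_ubound; exists t; first by rewrite /= in_itv /= t0 lexx.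
by rewrite Ginf1 min_l.
Qed.

Lemma Xi_le_g t : (0 <= t)%R -> Xi l r psi t <= g t.
Proof.
move=> t0; rewrite XiE ge_max; apply/andP; split.
  rewrite ge_min; apply/orP; right; apply: ereal_inf_lbound; exists t => //.
  by rewrite /= in_itv /= t0 lexx.
apply/ereal_supP => _ [v /= vI <-]; rewrite ge_min; apply/orP; right.
apply: ereal_inf_lbound; exists t => //.
by move: vI; rewrite /= !in_itv /= lexx andbT => /andP[].
Qed.

Lemma split_oc (p m : R) : (p < m)%R -> `]p, m]%classic = `]p, m[ `|` [set m].
Proof. by move=> pm; rewrite setUitv1 // bnd_simp. Qed.

Lemma split_cc (v m : R) : (v <= m)%R -> `[v, m]%classic = `[v, m[ `|` [set m].
Proof. by move=> pm; rewrite setUitv1 // bnd_simp. Qed.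

Lemma lat1 (X a b c d : \bar R) : a <= X -> X <= b ->
  maxe (mine X (mine b d)) (maxe (mine a (mine b d)) c) = maxe c (mine X d).
Proof.
move=> aX Xb.
have ad : mine a d <= mine X d by rewrite le_min !ge_min aX lexx orbT.
by rewrite (minA X b d) (min_l Xb) (minA a b d) (min_l (le_trans aX Xb)) maxA (max_l ad) maxC.
Qed.

Lemma Xi_const s t : (0 <= s)%R -> (s <= t)%R ->
  (forall u, (s < u)%R -> (u <= t)%R -> g u = g s /\ h u = h s) -> h s <= g s ->
  Xi l r psi t = Xi l r psi s.
Proof.
move=> s0 st H hg; case: (eqVneq s t) => [<-//|nst].
have st' : (s < t)%R by rewrite lt_neqAle nst st.
rewrite (Xi_decomp s0 st).
have -> : Ginf `]s, t] = g s.
  rewrite /Ginf (@image_cst_set1 _ _ _ _ (g s)) ?ereal_inf1 //.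
    by move=> u /=; rewrite in_itv /= => /andP[su ut]; case: (H u su ut).
  by exists t; rewrite /= in_itv /= st' lexx.
have -> : Ssup `]s, t] t = h s.
  rewrite /Ssup (@image_cst_set1 _ _ _ _ (h s)) ?ereal_sup1 //.
    move=> v /=; rewrite in_itv /= => /andP[sv vt].
    have -> : Ginf `[v, t] = g s.
      rewrite /Ginf (@image_cst_set1 _ _ _ _ (g s)) ?ereal_inf1 //.
        move=> u /=; rewrite in_itv /= => /andP[vu ut].
        by case: (H u (lt_le_trans sv vu) ut).
      by exists t; rewrite /= in_itv /= vt lexx.
    by case: (H v sv vt) => _ ->; rewrite min_l.
  by exists t; rewrite /= in_itv /= st' lexx.
rewrite min_l ?Xi_le_g // max_l //; exact: Xi_ge_h.
Qed.

Lemma Xi_step p m : (0 <= p)%R -> (p < m)%R ->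
  (forall u, (p <= u)%R -> (u < m)%R -> g u = g p /\ h u = h p) -> h p <= g p ->
  h m <= g m ->
  Xi l r psi m = maxe (h m) (mine (Xi l r psi p) (g m)).
Proof.
move=> p0 pm H hgp hgm.
rewrite (Xi_decomp p0 (ltW pm)).
have Gv : forall v, (p < v)%R -> (v < m)%R -> Ginf `[v, m] = mine (g p) (g m).
  move=> v pv vm.
  rewrite /Ginf (split_cc (ltW vm)) image_setU image_set1 ereal_infU ereal_inf1.
  rewrite (@image_cst_set1 _ _ _ _ (g p)) ?ereal_inf1 //.
    move=> u /=; rewrite in_itv /= => /andP[vu um].
    by case: (H u (ltW (lt_le_trans pv vu)) um).
  by exists v; rewrite /= in_itv /= lexx vm.
have mid : exists v, (p < v)%R /\ (v < m)%R.
  by exists ((p + m) / 2)%R; split; lra.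
have -> : Ginf `]p, m] = mine (g p) (g m).
  rewrite /Ginf (split_oc pm) image_setU image_set1 ereal_infU ereal_inf1.
  rewrite (@image_cst_set1 _ _ _ _ (g p)) ?ereal_inf1 //.
    move=> u /=; rewrite in_itv /= => /andP[vu um].
    by case: (H u (ltW vu) um).
  by case: mid => v [pv vm]; exists v; rewrite /= in_itv /= pv vm.
have -> : Ssup `]p, m] m = maxe (mine (h p) (mine (g p) (g m))) (h m).
  rewrite /Ssup (split_oc pm) image_setU image_set1 ereal_supU ereal_sup1.
  rewrite Ginf1 (min_l hgm).
  rewrite (@image_cst_set1 _ _ _ _ (mine (h p) (mine (g p) (g m)))) ?ereal_sup1 //.
    move=> v /=; rewrite in_itv /= => /andP[pv vm].
    by rewrite (Gv v pv vm); case: (H v (ltW pv) vm) => _ ->.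
  by case: mid => v [pv vm]; exists v; rewrite /= in_itv /= pv vm.
apply: lat1; [exact: Xi_ge_h | exact: Xi_le_g].
Qed.

Lemma Xi0 : h 0 <= g 0 -> Xi l r psi 0 = maxe (h 0) (mine 0 (g 0)).
Proof.
move=> hg; rewrite XiE /Ssup set_itv1 !image_set1 ereal_sup1 /Ginf set_itv1 image_set1 ereal_inf1.
rewrite (min_l hg).
case: (leP (h 0) 0) => h0.
  by rewrite maxC.
by rewrite min_l // max_l // max_l // ge_min (ltW h0).
Qed.

End E.

Section C.
Variable R : realType.

Lemma right_cst_cvg (f : R -> R) t q : t < q ->
  (forall u, t <= u -> u < q -> f u = f t) -> f x @[x --> t^'+] --> f t.
Proof.
move=> tq H; apply: cvg_near_cst; near=> x; apply: H.
  by near: x; exact: nbhs_right_ge.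
by near: x; exact: nbhs_right_lt.
Unshelve. all: by end_near. Qed.

Lemma left_cst_cvg (f : R -> R) p t : p < t ->
  (forall u, p <= u -> u < t -> f u = f p) -> f x @[x --> t^'-] --> f p.
Proof.
move=> pt H; apply: cvg_near_cst; near=> x; apply: H.
  by near: x; exact: nbhs_left_ge.
by near: x; exact: nbhs_left_lt.
Unshelve. all: by end_near. Qed.

Lemma left_cst_lim (f : R -> R) p t : p < t ->
  (forall u, p <= u -> u < t -> f u = f p) -> lim (f x @[x --> t^'-]) = f p.
Proof. move=> pt H; have := left_cst_cvg pt H. move=> /cvg_lim; apply; exact: norm_hausdorff. Qed.

Lemma side (eta lam : R -> R) (s t c L : R) :
  s <= t ->
  (forall u, s <= u -> u <= t -> L <= c + eta u) ->
  (forall a, s <= a -> a <= t -> (forall u, a < u -> u <= t -> L < c + eta u) -> eta t <= eta a) ->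
  (forall u, s < u -> u <= t -> eta x @[x --> u^'-] --> lam u) ->
  (forall u, s < u -> u <= t -> L < c + eta u -> eta u <= lam u) ->
  eta t <= eta s.
Proof.
move=> st H1 H2 H3 H4.
case: (pselect (exists u, [/\ s < u, u <= t & c + eta u <= L])) => [[z0 [sz0 z0t z0L]]|hn]; last first.
  apply: H2 => // u su ut; rewrite ltNge; apply/negP => hu; apply: hn; by exists u.
set Z := [set u | [/\ s < u, u <= t & c + eta u <= L]].
have hZ : has_sup Z by split; [exists z0 | exists t => u [] ].
set sig := sup Z.
have zs : forall z, Z z -> z <= sig by move=> z Zz; exact: sup_upper_bound.
have sigt : sig <= t by apply: ge_sup; [exists z0| move=> u []].
have ssig : s < sig by apply: lt_le_trans sz0 (zs z0 (And3 sz0 z0t z0L)).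
have beyond : forall u, sig < u -> u <= t -> L < c + eta u.
  move=> u su ut; rewrite ltNge; apply/negP => hu.
  by move: (zs u (And3 (lt_trans ssig su) ut hu)); rewrite leNgt su.
have Zle : forall z, Z z -> eta z <= eta s.
  move=> z [_ _ hz]; have := H1 s (lexx s) st; lra.
apply: le_trans (H2 sig (ltW ssig) sigt beyond) _.
case: (leP (c + eta sig) L) => hsig.
  by apply: Zle; split.
apply: le_trans (H4 sig ssig sigt hsig) _.
rewrite leNgt; apply/negP => hlt.
have := cvgr_gt (lam sig) (H3 sig ssig sigt) _ hlt => -[e /= e0 He].
have [z Zz ze] := sup_adherent e0 hZ.
have zsig : z < sig.
  rewrite lt_neqAle zs // andbT; apply/negP => /eqP zeq.
  by case: Zz => _ _; rewrite zeq; lra.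
have := He z; rewrite /ball /= ger0_norm ?subr_ge0 ?(ltW zsig) //.
move=> /(_ _ zsig) => hz; have := Zle z Zz; have : sig - z < e by rewrite /sig; lra.
move=> /hz; lra.
Qed.

End C.

Section D.
Variable R : realType.

Lemma clampP (a b X' : \bar R) : (a <= b)%E ->
  [/\ (a <= maxe a (mine X' b))%E, (maxe a (mine X' b) <= b)%E,
      ((a < maxe a (mine X' b))%E -> (maxe a (mine X' b) <= X')%E) &
      ((maxe a (mine X' b) < b)%E -> (X' <= maxe a (mine X' b))%E)].
Proof.
move=> ab; split.
- by rewrite le_max lexx.
- by rewrite ge_max ab ge_min lexx orbT.
- rewrite lt_max ltxx /= => h; rewrite ge_max ge_min lexx /= andbT.
  by apply/ltW; apply: lt_le_trans h _; rewrite ge_min lexx.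
- case: (leP X' b) => Xb; first by rewrite le_max lexx orbT.
  by rewrite gt_max ltxx andbF.
Qed.

Lemma clamp_uniq (a b X' x : \bar R) : (a <= x)%E -> (x <= b)%E ->
  ((a < x)%E -> (x <= X')%E) -> ((x < b)%E -> (X' <= x)%E) ->
  x = maxe a (mine X' b).
Proof.
move=> ax xb h1 h2; apply/le_anti/andP; split.
  case: (leP x a) => xa; first by rewrite le_max xa.
  by rewrite le_max le_min h1 // xb orbT.
rewrite ge_max ax /= ge_min; case: (ltP x b) => xb'.
  by rewrite h2.
by rewrite orbT.
Qed.


Lemma T1 (a x : R) (b : \bar R) : ((a%:E - b) <= x%:E)%E = ((a - x)%:E <= b)%E.
Proof.
case: b => [b||] /=; rewrite ?leNye ?leey //.
by rewrite -EFinD !lee_fin; apply/idP/idP => H; lra.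
Qed.

Lemma T2 (a x : R) (b : \bar R) : ((a%:E - b) < x%:E)%E = ((a - x)%:E < b)%E.
Proof.
case: b => [b||] /=; rewrite ?ltNye ?ltey //.
by rewrite -EFinD !lte_fin; apply/idP/idP => H; lra.
Qed.

Lemma T3 (a x : R) (b : \bar R) : (x%:E <= a%:E - b)%E = (b <= (a - x)%:E)%E.
Proof.
case: b => [b||] /=; rewrite ?leNye ?leey //.
by rewrite -EFinD !lee_fin; apply/idP/idP => H; lra.
Qed.

Lemma T4 (a x : R) (b : \bar R) : (x%:E < a%:E - b)%E = (b < (a - x)%:E)%E.
Proof.
case: b => [b||] /=; rewrite ?ltNye ?ltey //.
by rewrite -EFinD !lte_fin; apply/idP/idP => H; lra.
Qed.


Lemma PC_sup T (J J' : seq R) (f : R -> T) : {subset J <= J'} -> PC J f -> PC J' f.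
Proof.
by move=> sJ Hf u v u0 uv H; apply: Hf => // j jJ; apply: H; apply: sJ.
Qed.

Lemma PC_map2 T U V (J : seq R) (f : R -> T) (g : R -> U) (F : T -> U -> V) :
  PC J f -> PC J g -> PC J (fun t => F (f t) (g t)).
Proof. by move=> Hf Hg u v u0 uv H; rewrite (Hf u v) ?(Hg u v). Qed.

Lemma PC_map T U (J : seq R) (f : R -> T) (F : T -> U) :
  PC J f -> PC J (fun t => F (f t)).
Proof. by move=> Hf u v u0 uv H; rewrite (Hf u v). Qed.

Lemma PC_cadlag J (f : R -> R) : PC J f -> cadlag f.
Proof.
move=> Hf; split.
  move=> t t0; have [q tq hq] := right_gap t J.
  apply: (right_cst_cvg tq) => u tu uq; apply: (PC_const Hf t0 hq).
  by rewrite tu uq.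
move=> t t0; have [p [p0 pt hp]] := left_gap J t0.
apply: (cvgP (f p)); apply: (left_cst_cvg pt) => u pu ut.
by apply: (PC_const Hf p0 hp); rewrite pu ut.
Qed.

Lemma PC_leftlim J (f : R -> R) p t : PC J f -> 0 <= p -> p < t -> noJ J p t ->
  leftlim f t = f p.
Proof.
move=> Hf p0 pt hp; rewrite /leftlim gt_eqF ?(le_lt_trans p0 pt) //.
apply: (left_cst_lim pt) => u pu ut.
by apply: (PC_const Hf p0 hp); rewrite pu ut.
Qed.

Lemma mono_IP J (e : R -> R) (P : R -> Prop) :
  PC J e ->
  (forall p m, 0 <= p -> p < m -> noJ J p m -> P m -> e p <= e m) ->
  forall s t, 0 <= s -> s <= t -> (forall u, s < u -> u <= t -> P u) -> e s <= e t.
Proof.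
move=> He Hs s t s0 st.
pose Q t := s <= t -> (forall u, s < u -> u <= t -> P u) -> e s <= e t.
suff : Q t by apply.
apply: (@IP R J Q _ _ _ t (le_trans s0 st)).
- move=> u v u0 uv hJ hQ sv hP.
  case: (leP s u) => su.
    rewrite (He u v) //; apply: hQ => // w sw wu; apply: hP => //; exact: le_trans wu uv.
  rewrite (He s v) // => j jJ /andP[sj jv]; apply: (hJ j jJ).
  by rewrite jv (lt_trans su sj).
- by move=> s0' _; have -> : s = 0 by apply/eqP; rewrite eq_le s0' s0.
- move=> p m p0 pm hp hQ sm hP.
  case: (eqVneq s m) => [->//|nsm].
  have sm' : s < m by rewrite lt_neqAle nsm sm.
  case: (leP s p) => sp.
    apply: le_trans (hQ sp _) (Hs p m p0 pm hp (hP m sm' (lexx m))).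
    move=> w sw wp; apply: hP => //; exact: le_trans wp (ltW pm).
  apply: Hs => //.
  move=> j jJ /andP[sj jm]; apply: (hp j jJ); by rewrite jm (lt_trans sp sj).
  exact: hP.
Qed.

End D.

Section Main.
Variable R : realType.
Variables (l r : R -> \bar R) (psi : R -> R) (J : seq R).
Hypothesis Hl : forall t : R, 0 <= t -> l t != +oo%E.
Hypothesis Hr : forall t : R, 0 <= t -> r t != -oo%E.
Hypothesis Hlr : forall t : R, 0 <= t -> (l t <= r t)%E.
Hypothesis PCl : PC J l.
Hypothesis PCr : PC J r.
Hypothesis PCp : PC J psi.

Local Notation X := (Xi l r psi).
Local Notation gg := (g l psi).
Local Notation hh := (h r psi).

Lemma hg u : 0 <= u -> (hh u <= gg u)%E.
Proof. by move=> u0; apply: hleg; apply: Hlr. Qed.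

Lemma PCg : PC J gg.
Proof. exact: (@PC_map2 R _ _ _ J psi l (fun a b => ((a : R)%:E - b)%E) PCp PCl). Qed.

Lemma PCh : PC J hh.
Proof. exact: (@PC_map2 R _ _ _ J psi r (fun a b => ((a : R)%:E - b)%E) PCp PCr). Qed.

Lemma XiA : PC J X.
Proof.
move=> u v u0 uv hJ; apply: Xi_const => //; last exact: hg.
move=> w uw wv; have H : forall j, j \in J -> ~ (u < j <= w).
  move=> j jJ /andP[uj jw]; apply: (hJ j jJ); rewrite uj /=; exact: le_trans jw wv.
by rewrite (PCg u0 (ltW uw) H) (PCh u0 (ltW uw) H).
Qed.

Lemma XiB p m : 0 <= p -> p < m -> noJ J p m ->
  X m = maxe (hh m) (mine (X p) (gg m)).
Proof.
move=> p0 pm hp; apply: Xi_step => //; last by apply: hg; rewrite (le_trans p0 (ltW pm)).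
  move=> u pu um; rewrite (PC_const PCg p0 hp) ?pu ?um // (PC_const PCh p0 hp) ?pu ?um //.
exact: hg.
Qed.

Lemma XiC : X 0 = maxe (hh 0) (mine 0%E (gg 0)).
Proof. by apply: Xi0; apply: hg. Qed.

Lemma fin_clamp (a b x : \bar R) : a != +oo%E -> b != -oo%E -> x \is a fin_num ->
  maxe a (mine x b) \is a fin_num.
Proof.
move=> ha hb; rewrite !fin_numE => /andP[x1 x2]; apply/andP; split.
  rewrite -ltNye lt_max; apply/orP; right; by rewrite lt_min !ltNye x1 hb.
by rewrite -ltey gt_max ltey ha /= gt_min ltey x2.
Qed.

Lemma hfin u : 0 <= u -> hh u != +oo%E.
Proof. by move=> u0; rewrite /h; move: (Hr u0); case: (r u). Qed.

Lemma gfin u : 0 <= u -> gg u != -oo%E.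
Proof. by move=> u0; rewrite /g; move: (Hl u0); case: (l u). Qed.

Lemma Xfin t : 0 <= t -> X t \is a fin_num.
Proof.
apply: (@IP R J (fun t => X t \is a fin_num)).
- by move=> u v u0 uv hJ; rewrite (XiA u0 uv hJ).
- by rewrite XiC; apply: fin_clamp; [exact: hfin | exact: gfin | ].
- move=> p m p0 pm hp fp; rewrite (XiB p0 pm hp); apply: fin_clamp => //.
    by apply: hfin; exact: le_trans p0 (ltW pm).
  by apply: gfin; exact: le_trans p0 (ltW pm).
Qed.


Definition eta0 t := - fine (X t).
Definition phi0 t := psi t - fine (X t).

Lemma PCfX : PC J (fun t => fine (X t)).
Proof. exact: (PC_map fine XiA). Qed.

Lemma PCeta0 : PC J eta0.
Proof. exact: (PC_map (fun x : R => - x) PCfX). Qed.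

Lemma PCphi0 : PC J phi0.
Proof. exact: (PC_map2 (fun a b : R => a - b) PCp PCfX). Qed.

Lemma Xprev t : 0 <= t -> exists X' : R,
  leftlim eta0 t = - X' /\ X t = maxe (hh t) (mine X'%:E (gg t)).
Proof.
move=> t0; case: (eqVneq t 0) => [->|tn0].
  by exists 0; rewrite /leftlim eqxx oppr0 XiC.
have tpos : 0 < t by rewrite lt_neqAle eq_sym tn0 t0.
have [p [p0 pt hp]] := left_gap J tpos.
exists (fine (X p)); split.
  by rewrite (PC_leftlim PCeta0 p0 pt hp).
by rewrite (XiB p0 pt hp) fineK //; exact: Xfin.
Qed.

Lemma cand_ESP : ESP l r psi phi0 eta0.
Proof.
split; first exact: PC_cadlag PCphi0.
split; first exact: PC_cadlag PCeta0.
split.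
  move=> t t0; split; first by [].
  have lo := Xi_ge_h t0 (hg t0); have hi := Xi_le_g l r psi t0.
  rewrite -(fineK (Xfin t0)) in lo hi; rewrite /h in lo; rewrite /g in hi.
  by rewrite /phi0 -T3 -T1.
split.
  move=> s t s0 st; split => Hu.
    rewrite subr_ge0; apply: (@mono_IP R J eta0 (fun u => ((phi0 u)%:E < r u)%E) PCeta0 _ s t s0 st Hu).
    move=> p m p0 pm hp Pm.
    have m0 : 0 <= m by exact: le_trans p0 (ltW pm).
    have [_ _ c3 _] := clampP (X p) (hg m0).
    rewrite -(XiB p0 pm hp) -(fineK (Xfin m0)) -(fineK (Xfin p0)) in c3.
    rewrite /eta0 lerN2 -lee_fin; apply: c3.
    by rewrite /h T2.
  rewrite subr_le0 /eta0 lerN2.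
  apply: (@mono_IP R J (fun t => fine (X t)) (fun u => (l u < (phi0 u)%:E)%E) PCfX _ s t s0 st Hu).
  move=> p m p0 pm hp Pm.
  have m0 : 0 <= m by exact: le_trans p0 (ltW pm).
  have [_ _ _ c4] := clampP (X p) (hg m0).
  rewrite -(XiB p0 pm hp) -(fineK (Xfin m0)) -(fineK (Xfin p0)) in c4.
  rewrite -lee_fin; apply: c4.
  by rewrite /g T4.
move=> t t0; have [X' [HX1 HX2]] := Xprev t0.
have [_ _ c3 c4] := clampP X'%:E (hg t0).
rewrite -HX2 -(fineK (Xfin t0)) in c3 c4.
rewrite HX1 /eta0; split => Hc.
  have := c3 _; rewrite /h T2 => /(_ Hc); rewrite lee_fin; lra.
have := c4 _; rewrite /g T4 => /(_ Hc); rewrite lee_fin; lra.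
Qed.


Section Uniq.
Variables (phi eta : R -> R).
Hypothesis HE : ESP l r psi phi eta.

Lemma data_const u v : 0 <= u -> u <= v -> (forall j, j \in J -> ~ (u < j <= v)) ->
  forall w, u <= w -> w <= v -> [/\ psi w = psi u, l w = l u & r w = r u].
Proof.
move=> u0 uv hJ w uw wv.
have H : forall j, j \in J -> ~ (u < j <= w).
  move=> j jJ /andP[uj jw]; apply: (hJ j jJ); rewrite uj /=; exact: le_trans jw wv.
by rewrite (PCp u0 uw H) (PCl u0 uw H) (PCr u0 uw H).
Qed.

Lemma eta_const u v : 0 <= u -> u <= v -> (forall j, j \in J -> ~ (u < j <= v)) ->
  eta v = eta u.
Proof.
move=> u0 uv hJ; have D := data_const u0 uv hJ.
have [cphi [ceta [E1 [E2 E3]]]] := HE.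
have lamE : forall w, u < w -> leftlim eta w = lim (eta x @[x --> w^'-]).
  by move=> w uw; rewrite /leftlim gt_eqF // (le_lt_trans u0 uw).
have phiE : forall w, u <= w -> w <= v -> phi w = psi u + eta w.
  move=> w uw wv; have [dp _ _] := D w uw wv; rewrite -dp; apply: (E1 w _).1.
  exact: le_trans uw.
apply/le_anti/andP; split.
- case hlu: (l u) => [L||].
  + apply: (@side R eta (fun w => lim (eta x @[x --> w^'-])) u v (psi u) L) => //.
    * move=> w uw wv; have [_ dl _] := D w uw wv; rewrite -lee_fin -(phiE w uw wv) -hlu -dl.
      by have [_ [-> _]] := E1 w (le_trans u0 uw).
    * move=> a ua av Ha; rewrite -subr_le0; apply: (E2 a v (le_trans u0 ua) av).2.
      move=> w aw wv; have [_ dl _] := D w (le_trans ua (ltW aw)) wv.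
      by rewrite dl hlu (phiE w (le_trans ua (ltW aw)) wv) lte_fin Ha.
    * move=> w uw wv; exact: (ceta.2 w (le_lt_trans u0 uw)).
    * move=> w uw wv hw; rewrite -lamE // -subr_le0.
      apply: (E3 w (le_trans u0 (ltW uw))).2.
      have [_ dl _] := D w (ltW uw) wv.
      by rewrite dl hlu (phiE w (ltW uw) wv) lte_fin.
  + by move: (Hl u0); rewrite hlu.
  + rewrite -subr_le0; apply: (E2 u v u0 uv).2 => w uw wv.
    have [_ dl _] := D w (ltW uw) wv; by rewrite dl hlu ltNyr.
- case hru: (r u) => [U||].
  + rewrite -lerN2.
    apply: (@side R (fun x => - eta x) (fun w => - lim (eta x @[x --> w^'-])) u v (- psi u) (- U)) => //.
    * move=> w uw wv; have [_ _ dr] := D w uw wv.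
      suff : phi w <= U by rewrite (phiE w uw wv); lra.
      by rewrite -lee_fin -hru -dr; have [_ [_ ->]] := E1 w (le_trans u0 uw).
    * move=> a ua av Ha; rewrite lerN2 -subr_ge0; apply: (E2 a v (le_trans u0 ua) av).1.
      move=> w aw wv; have [_ _ dr] := D w (le_trans ua (ltW aw)) wv.
      rewrite dr hru (phiE w (le_trans ua (ltW aw)) wv) lte_fin.
      by have := Ha w aw wv; lra.
    * move=> w uw wv; exact: (cvgN (ceta.2 w (le_lt_trans u0 uw))).
    * move=> w uw wv hw; rewrite -lamE // lerN2 -subr_ge0.
      apply: (E3 w (le_trans u0 (ltW uw))).1.
      have [_ _ dr] := D w (ltW uw) wv.
      rewrite dr hru (phiE w (ltW uw) wv) lte_fin; lra.
  + rewrite -subr_ge0; apply: (E2 u v u0 uv).1 => w uw wv.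
    have [_ _ dr] := D w (ltW uw) wv; by rewrite dr hru ltry.
  + by move: (Hr u0); rewrite hru.
Qed.

Lemma jump t (X' : R) : 0 <= t -> leftlim eta t = - X' ->
  X t = maxe (hh t) (mine X'%:E (gg t)) -> eta t = eta0 t.
Proof.
move=> t0 hL hX; have [cphi [ceta [E1 [E2 E3]]]] := HE.
have [ep [lo hi]] := E1 t t0.
have e1 : psi t - - eta t = phi t by rewrite opprK ep.
rewrite /eta0; suff -> : X t = (- eta t)%:E by rewrite /= opprK.
rewrite hX; apply/esym; apply: clamp_uniq.
- by rewrite /h T1 e1.
- by rewrite /g T3 e1.
- rewrite /h T2 e1 lee_fin => /((E3 t t0).1); rewrite hL; lra.
- rewrite /g T4 e1 lee_fin => /((E3 t t0).2); rewrite hL; lra.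
Qed.

Lemma uniq_eta t : 0 <= t -> eta t = eta0 t.
Proof.
apply: (@IP R J (fun t => eta t = eta0 t)).
- move=> u v u0 uv hJ hQ.
  by rewrite (eta_const u0 uv hJ) hQ /eta0 (XiA u0 uv hJ).
- apply: (jump (X' := 0)) => //; first by rewrite /leftlim eqxx oppr0.
  exact: XiC.
- move=> p m p0 pm hp hQ.
  have m0 : 0 <= m by exact: le_trans p0 (ltW pm).
  apply: (jump (X' := - eta p)) => //.
    rewrite opprK /leftlim gt_eqF ?(le_lt_trans p0 pm) //.
    apply: (left_cst_lim pm) => u pu um; apply: eta_const => //.
    move=> j jJ /andP[pj ju]; apply: (hp j jJ); by rewrite pj (le_lt_trans ju um).
  by rewrite (XiB p0 pm hp) hQ /eta0 opprK fineK //; exact: Xfin.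
Qed.

End Uniq.

End Main.

Unset Implicit Arguments.
Theorem proposition2p9 (R : realType) (l r : R -> \bar R) (psi : R -> R) :
  (forall t : R, 0 <= t -> l t != +oo%E) ->
  (forall t : R, 0 <= t -> r t != -oo%E) ->
  pw_const l -> pw_const r -> pw_const psi ->
  (forall t : R, 0 <= t -> (l t <= r t)%E) ->
  (forall t : R, 0 <= t -> Xi l r psi t \is a fin_num) /\
  ESP l r psi (fun t => psi t - fine (Xi l r psi t)) (fun t => - fine (Xi l r psi t)) /\
  (forall phi eta : R -> R, ESP l r psi phi eta ->
     forall t : R, 0 <= t ->
       phi t = psi t - fine (Xi l r psi t) /\ eta t = - fine (Xi l r psi t)).
Proof.
move=> Hl Hr pl pr pp Hlr.
have [J1 P1] := pw_PC pl; have [J2 P2] := pw_PC pr; have [J3 P3] := pw_PC pp.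
pose J := J1 ++ J2 ++ J3.
have PCl : PC J l by apply: PC_sup P1 => x xJ; rewrite !mem_cat xJ.
have PCr : PC J r by apply: PC_sup P2 => x xJ; rewrite !mem_cat xJ orbT.
have PCp : PC J psi by apply: PC_sup P3 => x xJ; rewrite !mem_cat xJ !orbT.
split; first by move=> t t0; exact: (Xfin Hl Hr Hlr PCl PCr PCp t0).
split; first exact: (cand_ESP Hl Hr Hlr PCl PCr PCp).
move=> phi eta HE t t0.
have e := uniq_eta Hl Hr Hlr PCl PCr PCp HE t0.
split; last exact: e.
have [_ [_ [E1 _]]] := HE.
by rewrite (E1 t t0).1 e.
Qed.
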